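(* Let $a$ and $b$ be positive integers and let $d$ be the largest practical number dividing $\gcd(a,b)$. Consider the numbers $an+b$ with $n$ ranging over the nonnegative integers. Then: (a) If there exists a prime $p\le \sigma(d)+1$ such that $p\nmid \frac{a}{d}$, then there are infinitely many practical numbers of the form $an+b$. (b) If $b$ is a practical number and every prime $p\le\sigma(d)+1$ divides $\frac{a}{d}$, then there is exactly one practical number of the form $an+b$ (namely $b$). (c) If $b$ is not a practical number and every prime $p\le\sigma(d)+1$ divides $\frac{a}{d}$, then there are no practical numbers of the form $an+b$.
   Context: A positive integer $N$ is called a practical number if every integer in $[1,N]$ can be expressed as a sum of distinct positive divisors of $N$. $\sigma(N)$ denotes the sum of the positive divisors of $N$. *)

(* Defs.v *)
From mathcomp Require Import all_boot.
Set Implicit Arguments. Unset Strict Implicit. Unset Printing Implicit Defensive.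

Definition sigma (N : nat) : nat := \sum_(d <- divisors N) d.

(* N is practical: N >= 1 and every m in [1, N] is a sum of distinct positive
   divisors of N, i.e. the sum of a subsequence of the (duplicate-free)
   list of divisors of N. *)
Definition practical (N : nat) : Prop :=
  0 < N /\
  forall m, 1 <= m <= N -> exists s : seq nat, subseq s (divisors N) /\ sumn s = m.

Definition largest_practical_divisor (d g : nat) : Prop :=
  practical d /\ d %| g /\ (forall e, practical e -> e %| g -> e <= d).

(* Main.v *)
Require Import Defs.
From mathcomp Require Import all_boot.
From mathcomp Require Import zify.

Lemma mem_le_sumn (s : seq nat) y : y \in s -> y <= sumn s.
Proof.
elim: s => [|x s IH] //=; rewrite inE => /orP [/eqP ->|ys]; first exact: leq_addr.
by apply: leq_trans (IH ys) _; apply: leq_addl.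
Qed.

Lemma sumn_sub (s t : seq nat) : uniq s -> uniq t -> {subset s <= t} -> sumn s <= sumn t.
Proof.
elim: s t => [|x s IH] t //= us ut sub.
move/andP: us => [xs us].
have xt : x \in t := sub x (mem_head _ _).
rewrite (perm_sumn (perm_to_rem xt)) /= leq_add2l.
apply: IH => //; first by rewrite rem_uniq.
move=> y ys; rewrite (mem_rem_uniq _ ut) inE /=; apply/andP; split.
  by apply/eqP => yx; rewrite -yx ys in xs.
by apply: sub; rewrite inE ys orbT.
Qed.

Lemma complete_rep (l : seq nat) : uniq l ->
  (forall i, nth 0 l i <= (sumn (take i l)).+1) ->
  forall x, x <= sumn l -> exists s, uniq s /\ {subset s <= l} /\ sumn s = x.
Proof.
elim/last_ind: l => [|l z IH] ul cl x hx.
  exists [::]; split => //; split => //.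
  by move: hx => /=; rewrite leqn0 => /eqP ->.
rewrite -cats1 in ul cl hx *.
rewrite cat_uniq /= andbT orbF in ul; move/andP: ul => [ul zl].
have cl' : forall i, nth 0 l i <= (sumn (take i l)).+1.
  move=> i; case: (ltnP i (size l)) => hi.
    by have := cl i; rewrite nth_cat hi take_cat hi.
  by rewrite nth_default.
have hz : z <= (sumn l).+1.
  by have := cl (size l); rewrite nth_cat ltnn subnn take_cat ltnn subnn take0 cats0.
rewrite sumn_cat /= addn0 in hx.
case: (leqP x (sumn l)) => hxl.
  have [s [us [ss es]]] := IH ul cl' x hxl.
  exists s; split => //; split => //.
  by move=> y /ss yl; rewrite mem_cat yl.
have [s [us [ss es]]] := IH ul cl' (x - z) (ltac:(lia)).
exists (z :: s); split.
  rewrite /= us andbT; apply/negP => /ss; by rewrite (negbTE zl).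
split; last by rewrite /= es; lia.
move=> y; rewrite inE => /orP [/eqP ->|/ss yl]; rewrite mem_cat ?yl //.
by rewrite mem_seq1 eqxx orbT.
Qed.

Lemma practical_complete m : practical m ->
  forall i, nth 0 (divisors m) i <= (sumn (take i (divisors m))).+1.
Proof.
case=> m0 pm i; set D := divisors m.
case: (ltnP i (size D)) => hi; last by rewrite nth_default.
set e := nth 0 D i.
have eD : e \in D := mem_nth 0 hi.
have e_dvd : e %| m by rewrite dvdn_divisors.
have e_le : e <= m := dvdn_leq m0 e_dvd.
case: (leqP e 1) => e1; first by apply: leq_trans e1 _.
have [s [ss es]] := pm e.-1 (ltac:(lia)).
suff : e.-1 <= sumn (take i D) by lia.
rewrite -es; apply: sumn_sub.
- exact: subseq_uniq ss (divisors_uniq _).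
- exact: take_uniq (divisors_uniq _).
move=> y ys.
have yD : y \in D := mem_subseq ss ys.
have yle : y <= e.-1 by rewrite -es; apply: mem_le_sumn.
have jlt : index y D < size D by rewrite index_mem.
have ey : nth 0 D (index y D) = y by rewrite nth_index.
case: (ltnP (index y D) i) => hj.
  rewrite -ey -(nth_take 0 hj); apply: mem_nth.
  by rewrite size_take hi.
have := @sorted_leq_nth _ leq leq_trans leqnn 0 D (sorted_divisors m) i (index y D) hi jlt hj.
rewrite ey -/e; lia.
Qed.

Lemma rep_subseq N (s : seq nat) : uniq s -> {subset s <= divisors N} ->
  exists s', subseq s' (divisors N) /\ sumn s' = sumn s.
Proof.
move=> us ss; exists (filter (mem s) (divisors N)); split; first exact: filter_subseq.
apply: perm_sumn; apply: uniq_perm; first exact: filter_uniq (divisors_uniq _).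
  exact: us.
move=> y; rewrite mem_filter /=.
case: (boolP (y \in s)) => ys //=; exact: ss.
Qed.

Lemma practical_sigma m x : practical m -> x <= sigma m ->
  exists s, uniq s /\ {subset s <= divisors m} /\ sumn s = x.
Proof.
move=> pm hx; apply: complete_rep.
- exact: divisors_uniq.
- exact: practical_complete.
by rewrite sumnE.
Qed.

Lemma sigma_ge m : 0 < m -> m <= sigma m.
Proof.
move=> m0; rewrite /sigma -sumnE; apply: mem_le_sumn.
by rewrite -dvdn_divisors.
Qed.

Lemma sumn_mapk (s : seq nat) k : sumn (map (muln^~ k) s) = sumn s * k.
Proof. by elim: s => [|x s IH] //=; rewrite IH mulnDl. Qed.

Lemma practical_mul m k : practical m -> 0 < k -> k <= (sigma m).+1 ->
  practical (m * k).
Proof.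
move=> pm k0 hk; have m0 := pm.1; have pm' := pm.2.
split; first by rewrite muln_gt0 m0 k0.
move=> x /andP [x1 xmk].
have ex : x = x %/ k * k + x %% k := divn_eq x k.
have rk : x %% k < k := ltn_pmod x k0.
have qm : x %/ k <= m.
  by rewrite -(leq_pmul2r k0); apply: leq_trans xmk; rewrite {2}ex leq_addr.
have [s1 [u1 [ss1 e1]]] := @practical_sigma m (x %% k) pm (ltac:(lia)).
have [s2 [u2 [ss2 e2]]] := @practical_sigma m (x %/ k) pm (leq_trans qm (@sigma_ge m m0)).
have mk0 : 0 < m * k by rewrite muln_gt0 m0 k0.
have pos : forall e, e \in divisors m -> 0 < e.
  move=> e; rewrite -dvdn_divisors // => ed; case: e ed => // ; rewrite dvd0n => /eqP m00.
  by rewrite m00 in m0.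
have U : uniq (map (muln^~ k) s2 ++ s1).
  rewrite cat_uniq u1 andbT map_inj_uniq ?u2 /=; last by move=> u v /eqP; rewrite eqn_pmul2r // => /eqP.
  apply/hasPn => y ys; apply/mapP => -[e es ye].
  have e0 := pos e (ss2 e es).
  have := @mem_le_sumn s1 y ys; rewrite e1 => hy.
  have : e * k >= k by rewrite leq_pmull.
  lia.
have S : {subset map (muln^~ k) s2 ++ s1 <= divisors (m * k)}.
  move=> y; rewrite mem_cat => /orP [/mapP [e es ->]|ys]; rewrite -dvdn_divisors //.
    by apply: dvdn_mul (dvdnn k); rewrite dvdn_divisors // ss2.
  by apply: dvdn_mulr; rewrite dvdn_divisors // ss1.
have [s' [hs' es']] := @rep_subseq (m * k) _ U S.
exists s'; split => //; rewrite es' sumn_cat sumn_mapk e1 e2; lia.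
Qed.

Lemma no_ext d a' b' n : practical d ->
  (forall e, practical e -> e %| gcdn (a' * d) (b' * d) -> e <= d) ->
  0 < a' -> 0 < b' ->
  (forall p, prime p -> p <= sigma d + 1 -> p %| a') -> 0 < n ->
  ~ practical (a' * d * n + b' * d).
Proof.
move=> pd dmax a0 b0 H n0 pN; have d0 := pd.1.
set m := a' * n + b'.
have eN : a' * d * n + b' * d = m * d by rewrite /m mulnDl mulnAC.
have hp : forall p, prime p -> p <= sigma d + 1 -> ~~ (p %| m).
  move=> p pp hp; apply/negP => pm.
  have pa := H p pp hp.
  have pb : p %| b' by rewrite -(dvdn_addr b' (dvdn_mulr n pa)).
  have pg : d * p %| gcdn (a' * d) (b' * d).
    by rewrite dvdn_gcd !(mulnC _ d) !dvdn_pmul2l // pa pb.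
  have := dmax (d * p) (@practical_mul d p pd (prime_gt0 pp) (ltac:(lia))) pg.
  have p1 := prime_gt1 pp.
  have : d * 2 <= d * p by rewrite leq_mul2l p1 orbT.
  lia.
have an0 : 0 < a' * n by rewrite muln_gt0 a0 n0.
have m1 : 1 < m by rewrite /m; lia.
have hsig : sigma d + 1 < m.
  have qp := pdiv_prime m1; have qd := pdiv_dvd m.
  case: (leqP (pdiv m) (sigma d + 1)) => hq; first by have := hp _ qp hq; rewrite qd.
  by apply: leq_trans hq (dvdn_leq (ltnW m1) qd).
move: pN; rewrite eN => -[N0 pN].
have [s [ss es]] := pN (sigma d + 1) (ltac:(nia)).
have us := subseq_uniq ss (divisors_uniq _).
have sub : {subset s <= divisors d}.
  move=> e es'; have eN' := mem_subseq ss es'.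
  rewrite -dvdn_divisors // in eN'.
  have ele : e <= sigma d + 1 by rewrite -es; apply: mem_le_sumn.
  have e0 : 0 < e.
    by case: e eN' {ele es'} => //; rewrite dvd0n => /eqP h; rewrite h in N0.
  have cop : coprime e m.
    have gpos : 0 < gcdn e m by rewrite gcdn_gt0 e0.
    case: (ltngtP (gcdn e m) 1) => hg; first lia; last by rewrite /coprime hg.
    have qp := pdiv_prime hg.
    have qg := pdiv_dvd (gcdn e m).
    have qe : pdiv (gcdn e m) %| e := dvdn_trans qg (dvdn_gcdl _ _).
    have qm : pdiv (gcdn e m) %| m := dvdn_trans qg (dvdn_gcdr _ _).
    have ql : pdiv (gcdn e m) <= sigma d + 1 by apply: leq_trans ele; apply: dvdn_leq.
    by have := hp _ qp ql; rewrite qm.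
  by rewrite -dvdn_divisors // -(Gauss_dvdr d cop).
have := @sumn_sub s (divisors d) us (divisors_uniq d) sub.
rewrite es /sigma -sumnE; lia.
Qed.

Lemma ap_ext d a' b' p M : practical d -> 0 < a' -> prime p ->
  p <= sigma d + 1 -> ~~ (p %| a') ->
  exists n, M <= a' * d * n + b' * d /\ practical (a' * d * n + b' * d).
Proof.
move=> pd a0 pp hp np; have d0 := pd.1; have p1 := prime_gt1 pp.
set j := M + a' * a' * b' + a' + b'.
have pj : j < p ^ j := ltn_expl j p1.
set P := p ^ j.
have P0 : 0 < P by rewrite expn_gt0 (prime_gt0 pp).
have prac : forall i, practical (d * p ^ i).
  elim=> [|i IH]; first by rewrite expn0 muln1.
  rewrite expnSr mulnA; apply: (@practical_mul (d * p ^ i) p IH (prime_gt0 pp)).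
  case: i IH => [|i] IH; first by rewrite expn0 muln1; lia.
  have hs := @sigma_ge (d * p ^ i.+1) (ltac:(rewrite muln_gt0 d0 expn_gt0 (prime_gt0 pp); done)).
  have : p <= p ^ i.+1 by rewrite expnS leq_pmulr // expn_gt0 (prime_gt0 pp).
  have : p ^ i.+1 <= d * p ^ i.+1 by rewrite leq_pmull.
  lia.
have cop : coprime a' P by rewrite coprime_sym coprimeXl // prime_coprime.
have [u ua hu] := Bezoutl P a0.
move: hu; rewrite (eqP cop) => /dvdnP [c hc].
have bP : b' <= P by lia.
have [w ew] : exists w, P = b' + w by exists (P - b'); lia.
have [a1 ea1] : exists a1, a' = a1.+1 by exists a'.-1; lia.
set t := a1 * u * b' + a'.
have eq1 : P * t = a' * (a1 * b' * c + w) + b'.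
  rewrite /t ea1 in hc * ; rewrite ew in hc *.
  have h2 := congr1 (muln (a1 * b')) hc.
  lia.
exists (a1 * b' * c + w); split.
  have h1 : P <= d * P by rewrite leq_pmull.
  have h2 : d * P <= d * P * t by rewrite leq_pmulr // /t; lia.
  have <- : d * P * t = a' * d * (a1 * b' * c + w) + b' * d.
    by rewrite -mulnA eq1; lia.
  lia.
have <- : d * P * t = a' * d * (a1 * b' * c + w) + b' * d.
  by rewrite -mulnA eq1; lia.
apply: (@practical_mul (d * P) t (prac j)); first by rewrite /t; lia.
have hs := @sigma_ge (d * P) (ltac:(rewrite muln_gt0 d0 P0; done)).
have : P <= d * P by rewrite leq_pmull.
have : t <= a' * a' * b' + a'.
  rewrite /t leq_add2r; apply: leq_mul => //; apply: leq_mul => //; lia.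
lia.
Qed.

Theorem theorem2p2 (a b d : nat) (ha : 0 < a) (hb : 0 < b)
  (hd : largest_practical_divisor d (gcdn a b)) :
  ((exists p, prime p /\ p <= sigma d + 1 /\ ~~ (p %| a %/ d)) ->
     forall M, exists n, M <= a * n + b /\ practical (a * n + b))
  /\
  (practical b -> (forall p, prime p -> p <= sigma d + 1 -> p %| a %/ d) ->
     forall N, (exists n, N = a * n + b /\ practical N) <-> N = b)
  /\
  (~ practical b -> (forall p, prime p -> p <= sigma d + 1 -> p %| a %/ d) ->
     forall n, ~ practical (a * n + b)).
Proof.
move: hd => [pd [dg dmax]]; have d0 := pd.1.
have da : d %| a := dvdn_trans dg (dvdn_gcdl a b).
have db : d %| b := dvdn_trans dg (dvdn_gcdr a b).
case/dvdnP: da => a' ea; case/dvdnP: db => b' eb; subst a b.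
rewrite mulnK //.
have a0 : 0 < a' by move: ha; rewrite muln_gt0 => /andP [].
have b0 : 0 < b' by move: hb; rewrite muln_gt0 => /andP [].
split; [|split].
- move=> [p [pp [hp np]]] M; exact: (@ap_ext d a' b' p M pd a0 pp hp np).
- move=> pb H N; split.
    move=> [n [-> pN]]; case: n pN => [|n] pN; first by rewrite muln0 add0n.
    by exfalso; apply: (@no_ext d a' b' n.+1 pd dmax a0 b0 H (ltn0Sn _) pN).
  by move=> ->; exists 0; rewrite muln0 add0n.
- move=> npb H [|n]; first by rewrite muln0 add0n.
  exact: (@no_ext d a' b' n.+1 pd dmax a0 b0 H (ltn0Sn _)).
Qed.
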